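(* In the model below, assume $\lambda<\mu$ and that the sender uses any coding scheme satisfying the innovation guarantee property. Then for each receiver, the expected delivery delay of an arbitrary packet in steady state is $O\left(\frac{1}{(1-\rho)^2}\right)$ as $\rho=\lambda/\mu\to1^-$ (with $\lambda,\mu\in(0,1)$ and one of them held fixed).
   Context: Model: a sender broadcasts a stream of packets to $n$ receivers. Packets are fixed-length vectors over $\mathbb{F}_q$; the $k$-th arriving packet is $\mathbf{p}_k$. Time is slotted; in each slot one packet arrives with probability $\lambda$ independently (just after the slot begins). The sender transmits at most one linear combination of the packets it holds per slot (coefficients in the header). Each receiver independently receives it with probability $\mu$, else a detectable erasure; independent across receivers and slots; perfect feedback reaches the sender before the end of the slot. $\rho=\lambda/\mu$. A node's knowledge space is the space of coefficient vectors (w.r.t. arrived packets) of linear combinations it can compute; denote the sender's by $V$ and receiver $j$'s by $V_j$. A coding scheme satisfies the innovation guarantee property if in every slot the transmitted coefficient vector lies in $V\setminus V_j$ for every $j$ with $V_j\neq V$. The delivery delay of a packet with respect to a receiver is the time between the packet's arrival at the sender and its delivery by the receiver to the application, where packets may be delivered only in order (a packet is delivered once it and all earlier packets have been decoded). *)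

(* Defs.v *)
From mathcomp Require Import all_boot all_algebra.
From mathcomp Require Import boolp reals.

Set Implicit Arguments.
Unset Strict Implicit.
Unset Printing Implicit Defensive.
Import GRing.Theory Num.Theory.
Local Open Scope ring_scope.

(* Coefficient vectors w.r.t. the arrived packets p_0, p_1, ... (0-indexed):
   a vector is a function nat -> F (coefficient of packet i at index i). *)
Definition coefvec (F : finFieldType) := nat -> F.

Definition unitv (F : finFieldType) (k : nat) : coefvec F :=
  fun i => if i == k then 1 else 0.

Definition in_span (F : finFieldType) (S : seq (coefvec F)) (v : coefvec F) : Prop :=
  exists c : nat -> F,
    forall i, v i = \sum_(m < size S) c m * nth (fun _ => 0) S m i.

(* Sample path: a t = packet arrives in slot t;
   r t j = receiver j receives the transmission of slot t. *)
Definition arrivals := nat -> bool.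
Definition receptions (n : nat) := nat -> 'I_n -> bool.

(* A (deterministic) coding scheme: coefficient vector sent in slot t as a
   function of the sample path (causality imposed separately). *)
Definition scheme (F : finFieldType) (n : nat) :=
  nat -> arrivals -> receptions n -> coefvec F.

(* number of packets arrived by slot t (arrival of slot t included) *)
Definition arrived (a : arrivals) (t : nat) : nat := (\sum_(i < t.+1) a i)%N.

(* sender knowledge space in slot t = span of e_i, i < arrived a t *)
Definition Vsend (F : finFieldType) (a : arrivals) (t : nat) (v : coefvec F) : Prop :=
  forall i, (arrived a t <= i)%N -> v i = 0.

Definition rxvecs (F : finFieldType) (n : nat) (s : scheme F n)
  (a : arrivals) (r : receptions n) (j : 'I_n) (t : nat) : seq (coefvec F) :=
  [seq s u a r | u <- [seq u <- iota 0 t | r u j]].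

(* knowledge space of receiver j at the beginning of slot t *)
Definition Vrecv (F : finFieldType) (n : nat) (s : scheme F n)
  (a : arrivals) (r : receptions n) (j : 'I_n) (t : nat) (v : coefvec F) : Prop :=
  in_span (rxvecs s a r j t) v.

(* decision in slot t uses arrivals up to slot t and feedback up to slot t-1 *)
Definition causal (F : finFieldType) (n : nat) (s : scheme F n) : Prop :=
  forall t a a' r r',
    (forall u, (u <= t)%N -> a u = a' u) ->
    (forall u, (u < t)%N -> r u = r' u) ->
    s t a r = s t a' r'.

Definition sends_known (F : finFieldType) (n : nat) (s : scheme F n) : Prop :=
  forall t a r, Vsend a t (s t a r).

Definition IGP (F : finFieldType) (n : nat) (s : scheme F n) : Prop :=
  forall a r t (j : 'I_n),
    ~ (forall v, Vsend a t v <-> Vrecv s a r j t v) ->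
    Vsend a t (s t a r) /\ ~ Vrecv s a r j t (s t a r).

(* packets 0..k all decoded by receiver j by the end of slot t *)
Definition delivered (F : finFieldType) (n : nat) (s : scheme F n)
  (a : arrivals) (r : receptions n) (j : 'I_n) (k t : nat) : Prop :=
  forall i, (i <= k)%N -> Vrecv s a r j t.+1 (unitv F i).

(* event: packet k arrives in slot t and its delivery delay w.r.t. j exceeds d,
   i.e. it is not delivered by the end of slot t + d *)
Definition late (F : finFieldType) (n : nat) (s : scheme F n) (j : 'I_n)
  (k t d : nat) (a : arrivals) (r : receptions n) : Prop :=
  a t /\ arrived a t = k.+1 /\ ~ delivered s a r j k (t + d).

Definition slot_outcome (n : nat) := (bool * {ffun 'I_n -> bool})%type.

Definition bern (R : realType) (p : R) (b : bool) : R := if b then p else 1 - p.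

Definition ext_a (n T : nat) (w : {ffun 'I_T -> slot_outcome n}) : arrivals :=
  fun t => match insub t with Some i => (w i).1 | None => false end.

Definition ext_r (n T : nat) (w : {ffun 'I_T -> slot_outcome n}) : receptions n :=
  fun t j => match insub t with Some i => (w i).2 j | None => false end.

Definition prefix_weight (R : realType) (n T : nat) (lam mu : R)
  (w : {ffun 'I_T -> slot_outcome n}) : R :=
  \prod_(i < T) (bern lam (w i).1 * \prod_(j < n) bern mu ((w i).2 j)).

(* P(E) for an event E determined by the first T slots *)
Definition prefixProb (R : realType) (n T : nat) (lam mu : R)
  (E : arrivals -> receptions n -> Prop) : R :=
  \sum_(w : {ffun 'I_T -> slot_outcome n})
     prefix_weight lam mu w * (if `[< E (ext_a w) (ext_r w) >] then 1 else 0).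

(* truncation of E[D_k] = sum_{d>=0} P(D_k > d)
                      = sum_{d>=0} sum_{t>=0} P(packet k arrives at t, D_k > d);
   E[D_k] is the supremum over N of these nonnegative partial sums. *)
Definition truncExpDelay (R : realType) (F : finFieldType) (n : nat)
  (lam mu : R) (s : scheme F n) (j : 'I_n) (k N : nat) : R :=
  \sum_(d < N) \sum_(t < N) prefixProb (t + d).+1 lam mu (late s j k t d).

(* "limsup_k E[D_k] <= B" (up to the usual constant slack) *)
Definition eventually_delay_le (R : realType) (F : finFieldType) (n : nat)
  (lam mu : R) (s : scheme F n) (j : 'I_n) (B : R) : Prop :=
  exists K, forall k N, (K <= k)%N -> truncExpDelay lam mu s j k N <= B.

Definition valid_IGP_scheme (F : finFieldType) (n : nat) (s : scheme F n) : Prop :=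
  causal s /\ sends_known s /\ IGP s.

(* Main.v *)
Require Import Defs.
From mathcomp Require Import all_boot all_order all_algebra.
Import Order.TTheory.
From mathcomp Require Import boolp reals.
From mathcomp Require Import zify ring lra.
Import GRing.Theory Num.Theory.
Set Implicit Arguments.
Unset Strict Implicit.
Unset Printing Implicit Defensive.
Local Open Scope ring_scope.


Lemma in_span_nat (F : finFieldType) (S : seq (coefvec F)) v :
  in_span S v <-> exists c : nat -> F, forall i,
    v i = \sum_(0 <= m < size S) c m * nth (fun _ => 0) S m i.
Proof.
by split=> -[c Hc]; exists c => i; rewrite Hc big_mkord.
Qed.

Lemma in_span_nil (F : finFieldType) (v : coefvec F) :
  in_span [::] v <-> forall i, v i = 0.
Proof.
split.
  by move=> [c Hc] i; rewrite Hc big_ord0.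
by move=> H; exists (fun _ => 0) => i; rewrite H big_ord0.
Qed.

Lemma in_span_rcons (F : finFieldType) (S : seq (coefvec F)) x v :
  in_span (rcons S x) v <-> exists c0, in_span S (fun i => v i - c0 * x i).
Proof.
rewrite in_span_nat; split.
  move=> [c Hc]; exists (c (size S)); apply/in_span_nat; exists c => i.
  rewrite Hc size_rcons big_nat_recr //= nth_rcons ltnn eqxx addrK.
  apply: eq_big_nat => m /andP[_ Hm]; by rewrite nth_rcons Hm.
move=> [c0 /in_span_nat [c Hc]].
exists (fun m => if m == size S then c0 else c m) => i.
rewrite size_rcons big_nat_recr //= nth_rcons ltnn !eqxx.
apply/eqP; rewrite -subr_eq; apply/eqP; rewrite Hc.
apply: eq_big_nat => m /andP[_ Hm]; by rewrite nth_rcons Hm (ltn_eqF Hm).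
Qed.

Lemma rxvecsS (F : finFieldType) n (s : scheme F n) a r j t :
  rxvecs s a r j t.+1 =
  rxvecs s a r j t ++ (if r t j then [:: s t a r] else [::]).
Proof.
rewrite /rxvecs -addn1 iotaD filter_cat map_cat add0n /=.
by case: (r t j).
Qed.

Definition rowv (F : finFieldType) W (v : coefvec F) : 'rV[F]_W := \row_(i < W) v i.

Fixpoint Sp (F : finFieldType) n W (s : scheme F n) a r j t : 'M[F]_W :=
  match t with
  | 0 => 0
  | t'.+1 => if r t' j then (Sp W s a r j t' + rowv W (s t' a r))%MS
             else Sp W s a r j t'
  end.

Definition supp (F : finFieldType) W (v : coefvec F) := forall i, (W <= i)%N -> v i = 0.

Lemma rowv0 (F : finFieldType) W (v : coefvec F) : supp W v ->
  (rowv W v == 0) = `[< forall i, v i = 0 >].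
Proof.
move=> Hs; apply/eqP/asboolP.
  move=> H0 i; case: (ltnP i W) => Hi; last exact: Hs.
  by have := congr1 (fun M : 'rV[F]_W => M 0 (Ordinal Hi)) H0; rewrite !mxE.
by move=> H; apply/rowP => i; rewrite !mxE H.
Qed.

Lemma span_equiv (F : finFieldType) n W (s : scheme F n) a r j t :
  (forall u, (u < t)%N -> supp W (s u a r)) ->
  forall v, supp W v ->
  (Vrecv s a r j t v <-> (rowv W v <= Sp W s a r j t)%MS).
Proof.
elim: t => [|t IH] Hsu v Hv.
  rewrite /Vrecv /rxvecs /= in_span_nil submx0 rowv0 //.
  by split => [H|/asboolP]; [apply/asboolP|].
have IH' := IH (fun u Hu => Hsu u (ltnW Hu)).
rewrite /Vrecv rxvecsS /=; case: (r t j).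
  rewrite cats1 in_span_rcons.
  have Hst := Hsu t (ltnSn t).
  have Hsub : forall c0, supp W (fun i => v i - c0 * s t a r i).
    by move=> c0 i Hi; rewrite Hv // Hst // mulr0 subr0.
  have Hrow : forall c0, rowv W (fun i => v i - c0 * s t a r i)
                         = rowv W v - c0 *: rowv W (s t a r).
    by move=> c0; apply/rowP => i; rewrite !mxE.
  split.
    move=> [c0 Hc0]; have := (IH' _ (Hsub c0)).1 Hc0.
    rewrite Hrow => H.
    have -> : rowv W v = (rowv W v - c0 *: rowv W (s t a r)) + c0 *: rowv W (s t a r).
      by rewrite subrK.
    apply: addmx_sub_adds => //; apply: scalemx_sub; exact: submx_refl.
  move/sub_addsmxP => [[u1 u2] /= Huv].
  exists (u2 0 0); apply/(IH' _ (Hsub _)); rewrite Hrow Huv.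
  rewrite {1}(mx11_scalar u2) mul_scalar_mx addrK; exact: submxMl.
by rewrite cats0; apply: IH'.
Qed.


Definition cnt (a : arrivals) (t : nat) : nat := (\sum_(i < t) a i)%N.

Fixpoint Qb n (j : 'I_n) (a : arrivals) (r : receptions n) (t : nat) : nat :=
  match t with
  | 0 => 0%N
  | t'.+1 => ((Qb j a r t' + a t') - r t' j)%N
  end.

Lemma cntS a t : cnt a t.+1 = (cnt a t + a t)%N.
Proof. by rewrite /cnt big_ord_recr. Qed.

Lemma arrived_cnt a t : arrived a t = cnt a t.+1.
Proof. by []. Qed.

Lemma cnt_mono a m k : (m <= k)%N -> (cnt a m <= cnt a k)%N.
Proof.
elim: k => [|k IH]; first by rewrite leqn0 => /eqP ->.
rewrite leq_eqVlt => /orP[/eqP -> //|]; rewrite ltnS => /IH H.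
rewrite cntS; lia.
Qed.

Lemma LA_main (F : finFieldType) n (s : scheme F n) a r j U :
  sends_known s -> IGP s -> Qb j a r U = 0%N ->
  forall i, (i < cnt a U)%N -> Vrecv s a r j U (unitv F i).
Proof.
move=> Hsk Higp HQ.
set W := cnt a U.
have Hsu : forall u, (u < U)%N -> supp W (s u a r).
  move=> u Hu i Hi; apply: (Hsk u a r).
  rewrite arrived_cnt; apply: leq_trans Hi; exact: cnt_mono.
have Hinv : forall t, (t <= U)%N ->
    (cnt a t <= \rank (Sp W s a r j t) + Qb j a r t)%N.
  elim=> [|t IH] HtU; first by rewrite /cnt big_ord0.
  have HtU' : (t <= U)%N by apply: ltnW.
  have {}IH := IH HtU'.
  have Heq := span_equiv j (fun u Hu => Hsu u (leq_trans Hu HtU')).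
  rewrite cntS /=.
  case Hr: (r t j) => /=; last by lia.
  have Hmono : (\rank (Sp W s a r j t) <=
                \rank (Sp W s a r j t + rowv W (s t a r))%MS)%N.
    by apply: mxrankS; apply: addsmxSl.
  case Hq: (Qb j a r t + a t)%N => [|q].
    have -> : nat_of_bool (a t) = 0%N by lia.
    lia.
  have -> : (q.+1 - 1 = q)%N by lia.
  case: (pselect (forall v, Vsend a t v <-> Vrecv s a r j t v)) => Hall.
    have Hk : (cnt a t.+1 <= W)%N by apply: cnt_mono.
    have Hpid : ((pid_mx (cnt a t.+1) : 'M[F]_(cnt a t.+1, W)) <= Sp W s a r j t)%MS.
      apply/row_subP => i.
      have Hi : (i < W)%N by apply: leq_trans (ltn_ord i) Hk.
      have -> : row i (pid_mx (cnt a t.+1) : 'M[F]_(cnt a t.+1, W)) = rowv W (unitv F i).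
        apply/rowP => l; rewrite !mxE /unitv ltn_ord andbT eq_sym.
        by case: (l == i :> nat).
      apply/(Heq _); first by move=> l Hl; rewrite /unitv; case: eqP => // E; lia.
      apply/Hall => l Hl; rewrite /unitv; case: eqP => // E.
      have := ltn_ord i; have := arrived_cnt a t; lia.
    have := mxrankS Hpid; rewrite rank_pid_mx // -cntS.
    lia.
  have [Hsend Hnot] := Higp a r t j Hall.
  have Hlt : (Sp W s a r j t < Sp W s a r j t + rowv W (s t a r))%MS.
    rewrite ltmxE addsmxSl /=; apply/negP => H.
    apply: Hnot; apply/(Heq _ (Hsu t HtU)).
    exact: submx_trans (addsmxSr _ _) H.
  have := rank_ltmx Hlt; lia.
have := Hinv U (leqnn U); rewrite HQ addn0 => Hr.
have Hfull : row_full (Sp W s a r j U).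
  by rewrite /row_full eqn_leq rank_leq_col.
move=> i Hi; apply/(span_equiv j Hsu).
  by move=> l Hl; rewrite /unitv; case: eqP => // E; lia.
exact: submx_full.
Qed.


Fixpoint busy n (j : 'I_n) a r (d T0 : nat) : bool :=
  match d with
  | 0 => (0 < Qb j a r T0)%N
  | d'.+1 => (0 < Qb j a r T0)%N && busy j a r d' T0.+1
  end.

Lemma busy_spec n (j : 'I_n) a r d T0 :
  (forall e, (e <= d)%N -> (0 < Qb j a r (T0 + e))%N) -> busy j a r d T0.
Proof.
elim: d T0 => [|d IH] T0 H /=; first by have := H 0%N (leqnn _); rewrite addn0.
apply/andP; split; first by have := H 0%N (leq0n _); rewrite addn0.
apply: IH => e He; rewrite addSnnS; apply: H; by rewrite ltnS.
Qed.

Lemma in_span_ext (F : finFieldType) S (v w : coefvec F) :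
  (forall i, v i = w i) -> in_span S v -> in_span S w.
Proof. by move=> E [c Hc]; exists c => i; rewrite -E. Qed.

Lemma Vrecv_mono (F : finFieldType) n (s : scheme F n) a r j t t' v :
  (t <= t')%N -> Vrecv s a r j t v -> Vrecv s a r j t' v.
Proof.
elim: t' => [|t' IH]; first by rewrite leqn0 => /eqP ->.
rewrite leq_eqVlt => /orP[/eqP -> //|]; rewrite ltnS => /IH H /H {}H.
rewrite /Vrecv rxvecsS; case: (r t' j); last by rewrite cats0.
rewrite cats1; apply/in_span_rcons; exists 0.
by apply: in_span_ext H => i; rewrite mul0r subr0.
Qed.

Lemma late_busy (F : finFieldType) n (s : scheme F n) j k t d a r :
  sends_known s -> IGP s -> late s j k t d a r ->
  [&& a t, cnt a t == k & busy j a r d t.+1].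
Proof.
move=> Hsk Higp [Hat [Harr Hnd]].
rewrite Hat /=; rewrite arrived_cnt cntS Hat in Harr.
apply/andP; split; first by apply/eqP; lia.
apply: busy_spec => e He; rewrite lt0n; apply/negP => /eqP HQ.
apply: Hnd => i Hi.
apply: (@Vrecv_mono _ _ _ _ _ _ (t.+1 + e)); first by lia.
apply: (LA_main Hsk Higp HQ).
apply: leq_trans (cnt_mono a (leq_addr e t.+1)); rewrite cntS Hat; lia.
Qed.


Definition pw (R : realType) n (lam mu : R) (o : slot_outcome n) : R :=
  bern lam o.1 * \prod_(j < n) bern mu (o.2 j).

Definition Ex (R : realType) n (lam mu : R) T (f : arrivals -> receptions n -> R) : R :=
  \sum_(w : {ffun 'I_T -> slot_outcome n}) prefix_weight lam mu w * f (ext_a w) (ext_r w).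

Lemma prefixProbE (R : realType) n (lam mu : R) T E :
  prefixProb T lam mu E = Ex (n:=n) lam mu T (fun a r => if `[< E a r >] then 1 else 0).
Proof. by []. Qed.

Definition upda (a : arrivals) T (b : bool) : arrivals := fun t => if t == T then b else a t.
Definition updr n (r : receptions n) T (c : {ffun 'I_n -> bool}) : receptions n :=
  fun t => if t == T then (fun j => c j) else r t.

Definition extf (X : finType) T (w : {ffun 'I_T -> X}) (o : X) : {ffun 'I_T.+1 -> X} :=
  [ffun i => if unlift ord_max i is Some i' then w i' else o].

Lemma lift_maxW T (i : 'I_T) : lift ord_max i = widen_ord (leqnSn T) i.
Proof. apply: val_inj; exact: lift_max. Qed.

Lemma sum_ffunS (R : realType) (X : finType) T (G : {ffun 'I_T.+1 -> X} -> R) :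
  \sum_(w : {ffun 'I_T.+1 -> X}) G w = \sum_(w : {ffun 'I_T -> X}) \sum_(o : X) G (extf w o).
Proof.
rewrite pair_big /=.
rewrite (reindex (fun p : {ffun 'I_T -> X} * X => extf p.1 p.2)) //=.
exists (fun w : {ffun 'I_T.+1 -> X} => ([ffun i => w (widen_ord (leqnSn T) i)], w ord_max)).
  move=> [w o] _ /=; congr pair.
    by apply/ffunP => i; rewrite !ffunE -lift_maxW liftK.
  by rewrite ffunE unlift_none.
move=> w _; apply/ffunP => i; rewrite ffunE /=.
case: unliftP => [i'|] -> //; by rewrite ffunE lift_maxW.
Qed.

Lemma ext_a_lt n T (w : {ffun 'I_T -> slot_outcome n}) (i : 'I_T) : ext_a w i = (w i).1.
Proof.
rewrite /ext_a; case: insubP => [i' _ Hv|]; last by rewrite ltn_ord.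
by have -> : i' = i by apply: val_inj.
Qed.

Lemma ext_a_ge n T (w : {ffun 'I_T -> slot_outcome n}) t : (T <= t)%N -> ext_a w t = false.
Proof. by move=> H; rewrite /ext_a insubF // ltnNge H. Qed.

Lemma ext_r_lt n T (w : {ffun 'I_T -> slot_outcome n}) (i : 'I_T) : ext_r w i = (w i).2.
Proof.
rewrite /ext_r; case: insubP => [i' _ Hv|]; last by rewrite ltn_ord.
by have -> : i' = i by apply: val_inj.
Qed.

Lemma ext_r_ge n T (w : {ffun 'I_T -> slot_outcome n}) t : (T <= t)%N -> ext_r w t = (fun _ => false).
Proof. by move=> H; rewrite /ext_r insubF // ltnNge H. Qed.

Lemma ext_a_extf n T (w : {ffun 'I_T -> slot_outcome n}) o :
  ext_a (extf w o) = upda (ext_a w) T o.1.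
Proof.
apply: funext => t; rewrite /upda.
case: (ltngtP t T) => Ht.
- have -> : t = widen_ord (leqnSn T) (Ordinal Ht) by [].
  have E := ext_a_lt (extf w o) (widen_ord (leqnSn T) (Ordinal Ht)).
  rewrite E ffunE (_ : unlift ord_max _ = Some (Ordinal Ht)); last by rewrite -lift_maxW liftK.
  symmetry; exact: (ext_a_lt w (Ordinal Ht)).
- by rewrite !ext_a_ge // ltnW.
- have -> : t = @ord_max T by rewrite Ht.
  have E := ext_a_lt (extf w o) ord_max.
  by rewrite E ffunE unlift_none.
Qed.

Lemma ext_r_extf n T (w : {ffun 'I_T -> slot_outcome n}) o :
  ext_r (extf w o) = updr (ext_r w) T o.2.
Proof.
apply: funext => t; rewrite /updr.
case: (ltngtP t T) => Ht.
- have -> : t = widen_ord (leqnSn T) (Ordinal Ht) by [].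
  have E := ext_r_lt (extf w o) (widen_ord (leqnSn T) (Ordinal Ht)).
  rewrite E ffunE (_ : unlift ord_max _ = Some (Ordinal Ht)); last by rewrite -lift_maxW liftK.
  symmetry; exact: (ext_r_lt w (Ordinal Ht)).
- by rewrite !ext_r_ge // ltnW.
- have -> : t = @ord_max T by rewrite Ht.
  have E := ext_r_lt (extf w o) ord_max.
  by rewrite E ffunE unlift_none.
Qed.

Lemma Ex_step (R : realType) n (lam mu : R) T f :
  Ex lam mu T.+1 f =
  Ex (n:=n) lam mu T (fun a r => \sum_(o : slot_outcome n) pw lam mu o * f (upda a T o.1) (updr r T o.2)).
Proof.
rewrite /Ex sum_ffunS; apply: eq_bigr => w _.
rewrite mulr_sumr; apply: eq_bigr => o _.
rewrite ext_a_extf ext_r_extf /prefix_weight big_ord_recr /=.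
rewrite !ffunE unlift_none /pw -!mulrA; congr (_ * _).
apply: eq_bigr => i _; by rewrite ffunE -lift_maxW liftK.
Qed.


Lemma bern_ge0 (R : realType) (p : R) b : 0 <= p <= 1 -> 0 <= bern p b.
Proof. by move=> /andP[H0 H1]; case: b => //=; rewrite subr_ge0. Qed.

Lemma bern_sum (R : realType) (p : R) : \sum_(b : bool) bern p b = 1.
Proof. by rewrite big_bool /= addrC subrK. Qed.

Lemma weight_ge0 (R : realType) n (lam mu : R) T (w : {ffun 'I_T -> slot_outcome n}) :
  0 <= lam <= 1 -> 0 <= mu <= 1 -> 0 <= prefix_weight lam mu w.
Proof.
move=> Hl Hm; apply: prodr_ge0 => i _; apply: mulr_ge0; first exact: bern_ge0.
by apply: prodr_ge0 => k _; apply: bern_ge0.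
Qed.

Lemma Ex_le (R : realType) n (lam mu : R) T (f g : arrivals -> receptions n -> R) :
  0 <= lam <= 1 -> 0 <= mu <= 1 -> (forall a r, f a r <= g a r) ->
  Ex lam mu T f <= Ex lam mu T g.
Proof.
move=> Hl Hm H; apply: ler_sum => w _; apply: ler_wpM2l; last exact: H.
exact: weight_ge0.
Qed.

Lemma Ex_ge0 (R : realType) n (lam mu : R) T (f : arrivals -> receptions n -> R) :
  0 <= lam <= 1 -> 0 <= mu <= 1 -> (forall a r, 0 <= f a r) ->
  0 <= Ex lam mu T f.
Proof.
move=> Hl Hm H; apply: sumr_ge0 => w _; apply: mulr_ge0; last exact: H.
exact: weight_ge0.
Qed.

Lemma Ex_add (R : realType) n (lam mu : R) T (f g : arrivals -> receptions n -> R) :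
  Ex lam mu T (fun a r => f a r + g a r) = Ex lam mu T f + Ex lam mu T g.
Proof. by rewrite /Ex -big_split; apply: eq_bigr => w _; rewrite mulrDr. Qed.

Lemma Ex_scal (R : realType) n (lam mu : R) T c (f : arrivals -> receptions n -> R) :
  Ex lam mu T (fun a r => c * f a r) = c * Ex lam mu T f.
Proof. by rewrite /Ex mulr_sumr; apply: eq_bigr => w _; rewrite mulrCA. Qed.

Lemma Ex_sum (R : realType) n (lam mu : R) T M (f : nat -> arrivals -> receptions n -> R) :
  Ex lam mu T (fun a r => \sum_(x < M) f x a r) = \sum_(x < M) Ex lam mu T (f x).
Proof.
rewrite /Ex exchange_big /=; apply: eq_bigr => w _; by rewrite mulr_sumr.
Qed.

Lemma Ex_ext (R : realType) n (lam mu : R) T (f g : arrivals -> receptions n -> R) :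
  (forall a r, f a r = g a r) -> Ex lam mu T f = Ex lam mu T g.
Proof. by move=> H; apply: eq_bigr => w _; rewrite H. Qed.

Lemma pw_sum (R : realType) n (lam mu : R) : \sum_(o : slot_outcome n) pw lam mu o = 1.
Proof.
transitivity (\sum_(b : bool) \sum_(f : {ffun 'I_n -> bool}) pw lam mu (b, f)).
  by rewrite pair_big; apply: eq_big => // -[b f].
transitivity (\sum_(b : bool) bern lam b * \sum_(f : {ffun 'I_n -> bool}) \prod_(j < n) bern mu (f j)).
  by apply: eq_bigr => b _; rewrite mulr_sumr.
rewrite -big_distrl /= bern_sum mul1r.
rewrite -(bigA_distr_bigA (fun (_ : 'I_n) b => bern mu b)) /=.
by apply: big1 => i _; rewrite bern_sum.
Qed.

Lemma sum_ffun_marg (R : realType) n (mu : R) (j : 'I_n) (H : bool -> R) :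
  \sum_(f : {ffun 'I_n -> bool}) (\prod_(i < n) bern mu (f i)) * H (f j) =
  \sum_(c : bool) bern mu c * H c.
Proof.
pose K (i : 'I_n) (c : bool) := bern mu c * (if i == j then H c else 1).
transitivity (\sum_(f : {ffun 'I_n -> bool}) \prod_(i < n) K i (f i)).
  apply: eq_bigr => f _; rewrite /K big_split /=; congr (_ * _).
  by rewrite -big_mkcond big_pred1_eq.
rewrite -(bigA_distr_bigA K) /= (bigD1 j) //=.
rewrite [X in _ * X](_ : _ = 1); last first.
  apply: big1 => i Hij; rewrite /K (negbTE Hij).
  by rewrite (eq_bigr (fun c => bern mu c)) ?bern_sum // => c _; rewrite mulr1.
by rewrite mulr1; apply: eq_bigr => c _; rewrite /K eqxx.
Qed.

Lemma slot_avg (R : realType) n (lam mu : R) (j : 'I_n) (G : bool -> bool -> R) :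
  \sum_(o : slot_outcome n) pw lam mu o * G o.1 (o.2 j) =
  \sum_(b : bool) bern lam b * \sum_(c : bool) bern mu c * G b c.
Proof.
transitivity (\sum_(b : bool) \sum_(f : {ffun 'I_n -> bool}) pw lam mu (b, f) * G b (f j)).
  by rewrite pair_big; apply: eq_big => // -[b f].
apply: eq_bigr => b _; rewrite -(sum_ffun_marg mu j) mulr_sumr.
by apply: eq_bigr => f _; rewrite /pw /= mulrA.
Qed.

Lemma Ex_const (R : realType) n (lam mu : R) T c :
  Ex (n:=n) lam mu T (fun _ _ => c) = c.
Proof.
elim: T => [|T IH].
  rewrite /Ex (eq_bigr (fun _ => c)); last by move=> w _; rewrite /prefix_weight big_ord0 mul1r.
  by rewrite sumr_const card_ffun card_ord expn0.
rewrite Ex_step -[RHS]IH; apply: Ex_ext => a r.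
by rewrite -big_distrl /= pw_sum mul1r.
Qed.


Definition dep_lt (R : realType) n T (g : arrivals -> receptions n -> R) :=
  forall a a' r r', (forall u, (u < T)%N -> a u = a' u) ->
    (forall u, (u < T)%N -> r u = r' u) -> g a r = g a' r'.

Lemma Qb_dep n (j : 'I_n) a a' r r' t :
  (forall u, (u < t)%N -> a u = a' u) -> (forall u, (u < t)%N -> r u = r' u) ->
  Qb j a r t = Qb j a' r' t.
Proof.
elim: t => [//|t IH] Ha Hr /=.
rewrite IH; first by rewrite Ha // Hr.
- by move=> u Hu; apply: Ha; apply: ltnW.
- by move=> u Hu; apply: Hr; apply: ltnW.
Qed.

Lemma cnt_dep a a' t : (forall u, (u < t)%N -> a u = a' u) -> cnt a t = cnt a' t.
Proof. by move=> H; rewrite /cnt; apply: eq_bigr => i _; rewrite H. Qed.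

Lemma upda_lt a T b u : (u < T)%N -> upda a T b u = a u.
Proof. by move=> H; rewrite /upda (ltn_eqF H). Qed.

Lemma updr_lt n (r : receptions n) T c u : (u < T)%N -> updr r T c u = r u.
Proof. by move=> H; rewrite /updr (ltn_eqF H). Qed.

Lemma Ex_step_loc (R : realType) n (lam mu : R) (j : 'I_n) T
    (g : arrivals -> receptions n -> R) (H : nat -> nat -> bool -> bool -> R) :
  dep_lt T g ->
  Ex lam mu T.+1 (fun a r => g a r * H (Qb j a r T) (cnt a T) (a T) (r T j)) =
  Ex lam mu T (fun a r => g a r * \sum_(b : bool) bern lam b *
        \sum_(c : bool) bern mu c * H (Qb j a r T) (cnt a T) b c).
Proof.
move=> Hg; rewrite Ex_step; apply: Ex_ext => a r.
have Ha : forall o, forall u, (u < T)%N -> upda a T o u = a u.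
  by move=> o u Hu; rewrite upda_lt.
have Hr : forall (o : {ffun 'I_n -> bool}) u, (u < T)%N -> updr r T o u = r u.
  by move=> o u Hu; rewrite updr_lt.
transitivity (\sum_(o : slot_outcome n) pw lam mu o *
   (g a r * H (Qb j a r T) (cnt a T) o.1 (o.2 j))).
  apply: eq_bigr => o _; congr (_ * (_ * _)).
    by apply: Hg => u Hu; [rewrite Ha | rewrite Hr].
  rewrite (Qb_dep j (Ha o.1) (Hr o.2)).
  rewrite (cnt_dep (a' := a) (Ha o.1)).
  by rewrite /upda /updr eqxx.
rewrite (slot_avg lam mu j (fun b c => g a r * H (Qb j a r T) (cnt a T) b c)).
rewrite mulr_sumr; apply: eq_bigr => b _; rewrite mulrCA !mulr_sumr.
by apply: eq_bigr => c _; ring.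
Qed.

Lemma dep_ltS (R : realType) n T (g : arrivals -> receptions n -> R) :
  dep_lt T g -> dep_lt T.+1 g.
Proof.
move=> H a a' r r' Ha Hr; apply: H => u Hu; [apply: Ha | apply: Hr]; exact: ltnW.
Qed.

Lemma dep_lt_mulQ (R : realType) n (j : 'I_n) T (g : arrivals -> receptions n -> R)
  (P : nat -> bool) :
  dep_lt T g -> dep_lt T (fun a r => g a r * (P (Qb j a r T))%:R).
Proof.
move=> H a a' r r' Ha Hr /=; rewrite (H a a' r r' Ha Hr).
by rewrite (Qb_dep j Ha Hr).
Qed.

Lemma natE3 (R : realType) q (b c : bool) :
  (((q.+1 + b) - c)%N)%:R = q.+1%:R + (b : nat)%:R - (c : nat)%:R :> R.
Proof. by rewrite natrB ?natrD //; case: b; case: c => /=; lia. Qed.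

Lemma avgQ (R : realType) (lam mu : R) q :
  \sum_(b : bool) bern lam b * \sum_(c : bool) bern mu c * (((q.+1 + b) - c)%N)%:R
  = q.+1%:R + lam - mu.
Proof.
rewrite (eq_bigr (fun b : bool => bern lam b * \sum_(c : bool) bern mu c *
   (q.+1%:R + (b : nat)%:R - (c : nat)%:R))); last first.
  by move=> b _; congr (_ * _); apply: eq_bigr => c _; rewrite natE3.
rewrite !big_bool /=; ring.
Qed.

Lemma hitting (R : realType) n (lam mu : R) (j : 'I_n) :
  0 <= lam <= 1 -> 0 <= mu <= 1 -> lam < mu ->
  forall D T0 (g : arrivals -> receptions n -> R), dep_lt T0 g -> (forall a r, 0 <= g a r) ->
  \sum_(d < D) Ex lam mu (T0 + d) (fun a r => g a r * (busy j a r d T0)%:R)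
  <= Ex lam mu T0 (fun a r => g a r * (Qb j a r T0)%:R) / (mu - lam).
Proof.
move=> Hl Hm Hlm; have Hd : 0 < mu - lam by rewrite subr_gt0.
elim=> [|D IH] T0 g Hg Hg0.
  rewrite big_ord0; apply: divr_ge0; last exact: ltW.
  by apply: Ex_ge0 => // a r; apply: mulr_ge0.
rewrite big_ord_recl addn0 /=.
set g' := fun a r => g a r * (0 < Qb j a r T0)%N%:R.
have Hg' : dep_lt T0 g' by apply: dep_lt_mulQ.
have Hg'0 : forall a r, 0 <= g' a r by move=> a r; apply: mulr_ge0.
rewrite (eq_bigr (fun i : 'I_D => Ex lam mu (T0.+1 + i)
           (fun a r => g' a r * (busy j a r i T0.+1)%:R))); last first.
  move=> i _; rewrite ?lift0 addSnnS; apply: Ex_ext => a r /=.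
  rewrite /g'; case: (0 < Qb j a r T0)%N => /=; first by rewrite mulr1.
  by rewrite !mulr0 mul0r.
have := IH T0.+1 g' (dep_ltS Hg') Hg'0.
have Est : Ex lam mu T0.+1 (fun a r => g' a r * (Qb j a r T0.+1)%:R) =
  Ex lam mu T0 (fun a r => g' a r * \sum_(b : bool) bern lam b *
        \sum_(c : bool) bern mu c * (((Qb j a r T0 + b) - c)%N)%:R) :=
  Ex_step_loc lam mu j (fun q _ b c => (((q + b) - c)%N)%:R) Hg'.
rewrite Est => Hle.
apply: le_trans (lerD (lexx _) Hle) _.
rewrite le_eqVlt; apply/orP; left; apply/eqP.
rewrite !(mulrC _ (mu - lam)^-1) -!Ex_scal -Ex_add; apply: Ex_ext => a r.
rewrite /g'; case: (Qb j a r T0) => [|q] /=.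
  by rewrite !mulr0 !mul0r mulr0 addr0.
rewrite avgQ; field; lra.
Qed.


Lemma Qb_le n (j : 'I_n) a r t : (Qb j a r t <= t)%N.
Proof. elim: t => [//|t IH] /=; case: (a t); case: (r t j) => /=; lia. Qed.

Definition fV (R : realType) n (lam mu : R) (j : 'I_n) t m x :=
  Ex (n:=n) lam mu t (fun a r => ((cnt a t == m) && (x <= Qb j a r t)%N)%:R).
Definition gV (R : realType) n (lam mu : R) (j : 'I_n) t m x :=
  Ex (n:=n) lam mu t (fun a r => (((cnt a t).+1 == m) && (x <= Qb j a r t)%N)%:R).

Lemma dep_lt_one (R : realType) n T : dep_lt T (fun (_ : arrivals) (_ : receptions n) => (1 : R)).
Proof. by []. Qed.

Lemma step_ind (R : realType) (lam mu : R) q k m y :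
  \sum_(b : bool) bern lam b * \sum_(c : bool) bern mu c *
     (((k + b)%N == m) && (y.+1 <= (q + b) - c)%N)%:R =
  (1 - lam) * (mu * ((k == m) && (y.+2 <= q)%N)%:R + (1 - mu) * ((k == m) && (y.+1 <= q)%N)%:R)
  + lam * (mu * ((k.+1 == m) && (y.+1 <= q)%N)%:R + (1 - mu) * ((k.+1 == m) && (y <= q)%N)%:R).
Proof.
rewrite !big_bool /=.
have -> : (y < q + 1 - 1)%N = (y < q)%N by congr (_ < _)%N; lia.
have -> : (y < q + 1 - 0)%N = (y <= q)%N by rewrite subn0 addn1.
have -> : (y < q + 0 - 1)%N = (y.+1 < q)%N by apply/idP/idP; lia.
have -> : (y < q + 0 - 0)%N = (y < q)%N by rewrite subn0 addn0.
by rewrite addn1 addn0 addrC.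
Qed.

Lemma step_ind0 (R : realType) (lam mu : R) q k m :
  \sum_(b : bool) bern lam b * \sum_(c : bool) bern mu c *
     (((k + b)%N == m) && (0 <= (q + b) - c)%N)%:R =
  (1 - lam) * (k == m)%:R + lam * (k.+1 == m)%:R.
Proof.
rewrite !big_bool /= addn1 addn0 /= !andbT.
ring.
Qed.

Lemma Ex_step_loc1 (R : realType) n (lam mu : R) (j : 'I_n) T
    (H : nat -> nat -> bool -> bool -> R) :
  Ex lam mu T.+1 (fun a r => H (Qb j a r T) (cnt a T) (a T) (r T j)) =
  Ex lam mu T (fun a r => \sum_(b : bool) bern lam b *
        \sum_(c : bool) bern mu c * H (Qb j a r T) (cnt a T) b c).
Proof.
have := Ex_step_loc lam mu j H (@dep_lt_one R n T).
rewrite (Ex_ext _ _ _ (g := fun a r => H (Qb j a r T) (cnt a T) (a T) (r T j))); last by move=> *; rewrite mul1r.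
move=> ->; apply: Ex_ext => a r; by rewrite mul1r.
Qed.

Lemma fV_step (R : realType) n (lam mu : R) (j : 'I_n) t m y :
  fV lam mu j t.+1 m y.+1 =
  (1 - lam) * (mu * fV lam mu j t m y.+2 + (1 - mu) * fV lam mu j t m y.+1)
  + lam * (mu * gV lam mu j t m y.+1 + (1 - mu) * gV lam mu j t m y).
Proof.
rewrite /fV /gV.
rewrite (Ex_ext lam mu _ (g := fun a r => (fun q k (b c : bool) =>
     (((k + b)%N == m) && (y.+1 <= (q + b) - c)%N)%:R : R)
     (Qb j a r t) (cnt a t) (a t) (r t j))); last by move=> a r; rewrite cntS.
rewrite (Ex_step_loc1 lam mu j t (fun q k (b c : bool) =>
     (((k + b)%N == m) && (y.+1 <= (q + b) - c)%N)%:R : R)).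
rewrite (Ex_ext lam mu _ (g := fun a r =>
  (1 - lam) * (mu * ((cnt a t == m) && (y.+2 <= Qb j a r t)%N)%:R + (1 - mu) * ((cnt a t == m) && (y.+1 <= Qb j a r t)%N)%:R)
  + lam * (mu * (((cnt a t).+1 == m) && (y.+1 <= Qb j a r t)%N)%:R + (1 - mu) * (((cnt a t).+1 == m) && (y <= Qb j a r t)%N)%:R))); last first.
  by move=> a r; rewrite step_ind.
by rewrite !Ex_add !Ex_scal !Ex_add !Ex_scal.
Qed.

Lemma fV_step0 (R : realType) n (lam mu : R) (j : 'I_n) t m :
  fV lam mu j t.+1 m 0 = (1 - lam) * fV lam mu j t m 0 + lam * gV lam mu j t m 0.
Proof.
rewrite /fV /gV.
rewrite (Ex_ext lam mu _ (g := fun a r => (fun q k (b c : bool) =>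
     (((k + b)%N == m) && (0 <= (q + b) - c)%N)%:R : R)
     (Qb j a r t) (cnt a t) (a t) (r t j))); last by move=> a r; rewrite cntS.
rewrite (Ex_step_loc1 lam mu j t (fun q k (b c : bool) =>
     (((k + b)%N == m) && (0 <= (q + b) - c)%N)%:R : R)).
rewrite (Ex_ext lam mu _ (g := fun a r =>
  (1 - lam) * ((cnt a t == m) && (0 <= Qb j a r t)%N)%:R
  + lam * (((cnt a t).+1 == m) && (0 <= Qb j a r t)%N)%:R)); last first.
  by move=> a r; rewrite step_ind0 /= !andbT.
by rewrite !Ex_add !Ex_scal.
Qed.

Definition FV (R : realType) n (lam mu : R) (j : 'I_n) N m x :=
  \sum_(t < N) fV lam mu j t m x.
Definition GV (R : realType) n (lam mu : R) (j : 'I_n) N m x :=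
  \sum_(t < N) gV lam mu j t m x.

Lemma fV_ge0 (R : realType) n (lam mu : R) (j : 'I_n) t m x :
  0 <= lam <= 1 -> 0 <= mu <= 1 -> 0 <= fV lam mu j t m x.
Proof. by move=> Hl Hm; apply: Ex_ge0 => // a r; apply: ler0n. Qed.

Lemma gV_ge0 (R : realType) n (lam mu : R) (j : 'I_n) t m x :
  0 <= lam <= 1 -> 0 <= mu <= 1 -> 0 <= gV lam mu j t m x.
Proof. by move=> Hl Hm; apply: Ex_ge0 => // a r; apply: ler0n. Qed.

Lemma FV_split (R : realType) n (lam mu : R) (j : 'I_n) N m x :
  0 <= lam <= 1 -> 0 <= mu <= 1 ->
  FV lam mu j N m x <= fV lam mu j 0 m x + \sum_(t < N) fV lam mu j t.+1 m x.
Proof.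
move=> Hl Hm; case: N => [|N].
  by rewrite /FV !big_ord0 addr0; apply: fV_ge0.
rewrite /FV big_ord_recl lerD2l [leRHS]big_ord_recr /= -[leLHS]addr0 lerD //.
  by apply: fV_ge0.
Qed.

Lemma fV0 (R : realType) n (lam mu : R) (j : 'I_n) m x :
  fV lam mu j 0 m x = ((0 == m) && (x <= 0)%N)%:R.
Proof.
rewrite /fV -(Ex_const n lam mu 0 (((0 == m) && (x <= 0)%N)%:R)).
by apply: Ex_ext => a r; rewrite /cnt big_ord0.
Qed.

Lemma FV_rec (R : realType) n (lam mu : R) (j : 'I_n) N m y :
  0 <= lam <= 1 -> 0 <= mu <= 1 ->
  FV lam mu j N m y.+1 <=
  (1 - lam) * (mu * FV lam mu j N m y.+2 + (1 - mu) * FV lam mu j N m y.+1)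
  + lam * (mu * GV lam mu j N m y.+1 + (1 - mu) * GV lam mu j N m y).
Proof.
move=> Hl Hm; apply: le_trans (FV_split j N m y.+1 Hl Hm) _.
rewrite fV0 andbF add0r.
under eq_bigr do rewrite fV_step.
rewrite big_split /= -!mulr_sumr !big_split /= -!mulr_sumr.
by [].
Qed.

Lemma FV_rec0 (R : realType) n (lam mu : R) (j : 'I_n) N m :
  0 <= lam <= 1 -> 0 <= mu <= 1 ->
  FV lam mu j N m 0 <=
  (0 == m)%:R + (1 - lam) * FV lam mu j N m 0 + lam * GV lam mu j N m 0.
Proof.
move=> Hl Hm; apply: le_trans (FV_split j N m 0 Hl Hm) _.
rewrite fV0 andbT -addrA lerD2l.
under eq_bigr do rewrite fV_step0.
by rewrite big_split /= -!mulr_sumr.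
Qed.

Lemma GV0 (R : realType) n (lam mu : R) (j : 'I_n) N x :
  GV lam mu j N 0 x = 0.
Proof.
rewrite /GV big1 // => t _; rewrite /gV -(Ex_const n lam mu t 0).
by apply: Ex_ext.
Qed.

Lemma GVS (R : realType) n (lam mu : R) (j : 'I_n) N m x :
  GV lam mu j N m.+1 x = FV lam mu j N m x.
Proof. by apply: eq_bigr => t _; apply: Ex_ext. Qed.

Lemma FV_big (R : realType) n (lam mu : R) (j : 'I_n) N m x :
  (N <= x)%N -> FV lam mu j N m x = 0.
Proof.
move=> Hx; rewrite /FV big1 // => t _; rewrite /fV -(Ex_const n lam mu t 0).
apply: Ex_ext => a r.
have H1 := Qb_le j a r t; have H2 := ltn_ord t.
have -> : (x <= Qb j a r t)%N = false by apply/negP => H3; lia.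
by rewrite andbF.
Qed.

Definition rr (R : realType) (lam mu : R) := lam * (1 - mu) / (mu * (1 - lam)).

Lemma rr_ge0 (R : realType) (lam mu : R) : 0 < lam -> lam < mu -> mu < 1 -> 0 <= rr lam mu.
Proof.
move=> H1 H2 H3; rewrite /rr; apply: divr_ge0; apply: mulr_ge0; lra.
Qed.

Lemma arith_step (R : realType) (lam mu : R) A B C D (z : R) :
  0 < lam -> lam < mu -> mu < 1 -> 0 <= z ->
  A <= (1 - lam) * (mu * B + (1 - mu) * A) + lam * (mu * C + (1 - mu) * D) ->
  B <= z * rr lam mu ^+ 2 / lam -> C <= z * rr lam mu / lam -> D <= z / lam ->
  A <= z * rr lam mu / lam.
Proof.
move=> H1 H2 H3 Hz HA HB HC HD.
set r := rr lam mu.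
have Hmu : 0 < mu by lra.
have Hs : 0 < lam + mu - lam * mu by nra.
have key : (1 - lam) * mu * r ^+ 2 + lam * mu * r + lam * (1 - mu) =
           (lam + mu - lam * mu) * r.
  rewrite /r /rr; field; lra.
have E1 : A * (lam + mu - lam * mu) <=
          (1 - lam) * mu * B + lam * mu * C + lam * (1 - mu) * D.
  lra.
have E2 : (1 - lam) * mu * B + lam * mu * C + lam * (1 - mu) * D <=
          (1 - lam) * mu * (z * r ^+ 2 / lam) + lam * mu * (z * r / lam)
          + lam * (1 - mu) * (z / lam).
  apply: lerD; [apply: lerD|]; apply: ler_wpM2l => //; nra.
have E3 : (1 - lam) * mu * (z * r ^+ 2 / lam) + lam * mu * (z * r / lam)
          + lam * (1 - mu) * (z / lam) = (z * r / lam) * (lam + mu - lam * mu).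
  rewrite /r /rr; field; lra.
rewrite E3 in E2.
rewrite -(ler_pM2r Hs); exact: le_trans E1 E2.
Qed.

Lemma V_main (R : realType) n (lam mu : R) (j : 'I_n) N :
  0 < lam -> lam < mu -> mu < 1 ->
  forall m x, FV lam mu j N m x <= rr lam mu ^+ x / lam.
Proof.
move=> H1 H2 H3.
have Hl : 0 <= lam <= 1 by apply/andP; split; lra.
have Hm : 0 <= mu <= 1 by apply/andP; split; lra.
have Hr := rr_ge0 H1 H2 H3.
suff Hgen : forall m, (forall x, GV lam mu j N m x <= rr lam mu ^+ x / lam) ->
    ((0 == m)%:R + lam * GV lam mu j N m 0 <= 1 :> R) ->
    forall x, FV lam mu j N m x <= rr lam mu ^+ x / lam.
  elim=> [|m IH]; apply: Hgen.
  - by move=> x; rewrite GV0; apply: divr_ge0; [apply: exprn_ge0|lra].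
  - by rewrite GV0 mulr0 addr0.
  - by move=> x; rewrite GVS.
  - rewrite GVS /= add0r; have := IH 0%N; rewrite expr0 ler_pdivlMr // => H.
    by rewrite mulrC.
move=> m HG Hb [|y].
  have H := FV_rec0 j N m Hl Hm.
  have HG0 := gV_ge0.
  rewrite expr0 ler_pdivlMr //; nra.
suff Hd : forall d y, (N <= y.+1 + d)%N -> FV lam mu j N m y.+1 <= rr lam mu ^+ y.+1 / lam.
  by apply: (Hd N); lia.
elim=> [|d IHd] {}y Hd.
  rewrite FV_big; last by lia.
  by apply: divr_ge0; [apply: exprn_ge0|lra].
case: (leqP N y.+1) => HN.
  rewrite FV_big //; by apply: divr_ge0; [apply: exprn_ge0|lra].
have Hz : 0 <= rr lam mu ^+ y by apply: exprn_ge0.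
rewrite exprS (mulrC (rr lam mu)).
apply: (arith_step H1 H2 H3 Hz (FV_rec j N m y Hl Hm)).
- have := IHd y.+1 (ltac:(lia)); rewrite !exprS expr0 mulr1.
  by rewrite [X in _ <= X / _ -> _]mulrA [X in _ -> _ <= X / _]mulrC.
- by have := HG y.+1; rewrite exprS (mulrC (rr lam mu)).
- exact: HG y.
Qed.


Lemma count_le (R : realType) (b : bool) (Q M : nat) : (Q < M)%N ->
  \sum_(x < M) (b && (x <= Q)%N)%:R = (b : nat)%:R * Q.+1%:R :> R.
Proof.
move=> HQ.
have H : forall M', \sum_(x < M') ((x <= Q)%N : nat)%:R = (minn Q.+1 M')%:R :> R.
  elim=> [|M' IH]; first by rewrite big_ord0 minn0.
  rewrite big_ord_recr /= IH -natrD; congr (_%:R).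
  case: (leqP M' Q) => H; lia.
rewrite (eq_bigr (fun x : 'I_M => (b : nat)%:R * ((x <= Q)%N : nat)%:R)); last first.
  by move=> x _; case: b => /=; rewrite ?mul1r ?mul0r.
rewrite -mulr_sumr H; congr (_ * _%:R); lia.
Qed.

Lemma geom (R : realType) (r : R) M : 0 <= r < 1 -> \sum_(x < M) r ^+ x <= (1 - r)^-1.
Proof.
move=> /andP[H0 H1].
have E : forall M', (1 - r) * \sum_(x < M') r ^+ x = 1 - r ^+ M'.
  elim=> [|M' IH]; first by rewrite big_ord0 mulr0 expr0 subrr.
  rewrite big_ord_recr /= mulrDr IH exprS; ring.
have Hp : 0 < 1 - r by lra.
rewrite -(ler_pM2l Hp) E mulrV ?unitfE ?gt_eqF //.
have : 0 <= r ^+ M by apply: exprn_ge0.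
lra.
Qed.

Lemma sumQ (R : realType) n (lam mu : R) (j : 'I_n) N k :
  \sum_(t < N) Ex lam mu t (fun a r => (cnt a t == k)%:R * (Qb j a r t).+1%:R)
  = \sum_(x < N.+1) FV lam mu j N k x.
Proof.
rewrite /FV exchange_big /=; apply: eq_bigr => t _.
rewrite /fV -(Ex_sum lam mu t N.+1 (fun x a r => ((cnt a t == k) && (x <= Qb j a r t)%N)%:R)).
apply: Ex_ext => a r.
rewrite count_le //; apply: leq_ltn_trans (Qb_le j a r t) _.
by apply: ltnW; rewrite ltnS.
Qed.


Lemma late_le (R : realType) (F : finFieldType) n (lam mu : R) (s : scheme F n) j k t d :
  0 <= lam <= 1 -> 0 <= mu <= 1 -> sends_known s -> IGP s ->
  prefixProb (t + d).+1 lam mu (late s j k t d) <=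
  Ex lam mu (t.+1 + d) (fun a r => ((a t) && (cnt a t == k))%:R * (busy j a r d t.+1)%:R).
Proof.
move=> Hl Hm Hsk Higp; rewrite prefixProbE -addSn; apply: Ex_le => // a r.
case: asboolP => H.
  by have /and3P[-> /eqP -> ->] := late_busy Hsk Higp H; rewrite eqxx mulr1.
by apply: mulr_ge0; apply: ler0n.
Qed.

Lemma gk_dep (R : realType) n k t :
  dep_lt (R:=R) (n:=n) t.+1 (fun a r => ((a t) && (cnt a t == k))%:R).
Proof.
move=> a a' r r' Ha Hr /=; rewrite Ha // (cnt_dep (a' := a')) // => u Hu.
by apply: Ha; apply: ltnW.
Qed.

Lemma gk_step (R : realType) n (lam mu : R) (j : 'I_n) t k :
  0 <= lam <= 1 -> 0 <= mu <= 1 ->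
  Ex lam mu t.+1 (fun a r => ((a t) && (cnt a t == k))%:R * (Qb j a r t.+1)%:R)
  <= lam * Ex lam mu t (fun a r => (cnt a t == k)%:R * (Qb j a r t).+1%:R).
Proof.
move=> Hl Hm.
rewrite (Ex_ext lam mu _ (g := fun a r => (fun q c (b b' : bool) =>
   ((b && (c == k))%:R * (((q + b) - b')%N)%:R : R)) (Qb j a r t) (cnt a t) (a t) (r t j))) //.
rewrite (Ex_step_loc1 lam mu j t (fun q c (b b' : bool) =>
   ((b && (c == k))%:R * (((q + b) - b')%N)%:R : R))).
rewrite -Ex_scal; apply: Ex_le => // a r.
rewrite !big_bool /= !mul0r !mulr0 !addr0.
case: (cnt a t == k) => /=; last by rewrite !(mul0r, mulr0, addr0).
have -> : ((Qb j a r t + 1 - 1)%N)%:R = (Qb j a r t)%:R :> R by congr (_%:R); lia.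
have -> : ((Qb j a r t + 1 - 0)%N)%:R = (Qb j a r t)%:R + 1 :> R.
  by rewrite subn0 addn1 -natr1.
rewrite -natr1 ?mul1r.
have : 0 <= (Qb j a r t)%:R :> R by apply: ler0n.
move: Hl Hm => /andP[? ?] /andP[? ?]; nra.
Qed.

Lemma delay_bound (R : realType) (F : finFieldType) n (lam mu : R) (s : scheme F n) j k N :
  0 < lam -> lam < mu -> mu < 1 -> sends_known s -> IGP s ->
  truncExpDelay lam mu s j k N <= mu * (1 - lam) / (mu - lam) ^+ 2.
Proof.
move=> H1 H2 H3 Hsk Higp.
have Hl : 0 <= lam <= 1 by apply/andP; split; lra.
have Hm : 0 <= mu <= 1 by apply/andP; split; lra.
have Hd : 0 < mu - lam by lra.
set X := fun t => Ex lam mu t (fun a r => (cnt a t == k)%:R * (Qb j a r t).+1%:R).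
have S1 : truncExpDelay lam mu s j k N <=
  \sum_(t < N) \sum_(d < N) Ex lam mu (t.+1 + d)
     (fun a r => ((a t) && (cnt a t == k))%:R * (busy j a r d t.+1)%:R).
  rewrite /truncExpDelay exchange_big /=.
  apply: ler_sum => t _; apply: ler_sum => d _; exact: late_le.
have S2 : \sum_(t < N) \sum_(d < N) Ex lam mu (t.+1 + d)
     (fun a r => ((a t) && (cnt a t == k))%:R * (busy j a r d t.+1)%:R)
   <= \sum_(t < N) (lam * X t) / (mu - lam).
  apply: ler_sum => t _.
  apply: le_trans (hitting j Hl Hm H2 N (@gk_dep R n k t) _) _.
    by move=> a r; apply: ler0n.
  rewrite ler_pM2r ?invr_gt0 //; exact: gk_step.
have S3 : \sum_(t < N) (lam * X t) / (mu - lam) = lam / (mu - lam) * \sum_(t < N) X t.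
  by rewrite mulr_sumr; apply: eq_bigr => t _; rewrite mulrAC.
have S4 : \sum_(t < N) X t <= (1 - rr lam mu)^-1 / lam.
  rewrite /X sumQ.
  apply: (@le_trans _ _ (\sum_(x < N.+1) rr lam mu ^+ x / lam)).
    by apply: ler_sum => x _; apply: V_main.
  rewrite -mulr_suml ler_pM2r ?invr_gt0 //.
  apply: geom; apply/andP; split; first exact: rr_ge0.
  rewrite /rr ltr_pdivrMr; last by apply: mulr_gt0; lra.
  nra.
apply: le_trans S1 _; apply: le_trans S2 _; rewrite S3.
apply: le_trans (ler_wpM2l _ S4) _; first by apply: divr_ge0; lra.
rewrite le_eqVlt; apply/orP; left; apply/eqP.
rewrite /rr; field; lra.
Qed.

Theorem theorem9 :
  forall (R : realType) (F : finFieldType) (n : nat),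
    (* regime 1: mu fixed, lambda -> mu^- *)
    (forall mu : R, 0 < mu < 1 ->
       exists C : R, 0 < C /\ exists delta : R, 0 < delta /\
       forall lam : R, 0 < lam -> lam < mu -> 1 - delta < lam / mu ->
       forall s : scheme F n, valid_IGP_scheme s ->
       forall j : 'I_n,
         eventually_delay_le lam mu s j (C / (1 - lam / mu) ^+ 2))
    /\
    (* regime 2: lambda fixed, mu -> lambda^+ *)
    (forall lam : R, 0 < lam < 1 ->
       exists C : R, 0 < C /\ exists delta : R, 0 < delta /\
       forall mu : R, lam < mu -> mu < 1 -> 1 - delta < lam / mu ->
       forall s : scheme F n, valid_IGP_scheme s ->
       forall j : 'I_n,
         eventually_delay_le lam mu s j (C / (1 - lam / mu) ^+ 2)).
Proof.
move=> R F n; split.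
  move=> mu /andP[Hm0 Hm1]; exists mu^-1; split; first by rewrite invr_gt0.
  exists 1; split; first by lra.
  move=> lam Hl0 Hlm _ s [_ [Hsk Higp]] j; exists 0%N => k N _.
  apply: le_trans (delay_bound j k N Hl0 Hlm Hm1 Hsk Higp) _.
  have -> : mu^-1 / (1 - lam / mu) ^+ 2 = mu / (mu - lam) ^+ 2.
    by field; lra.
  rewrite ler_pM2r; first by nra.
  by rewrite invr_gt0; apply: exprn_gt0; lra.
move=> lam /andP[Hl0 Hl1]; exists lam^-1; split; first by rewrite invr_gt0.
exists 1; split; first by lra.
move=> mu Hlm Hm1 _ s [_ [Hsk Higp]] j; exists 0%N => k N _.
apply: le_trans (delay_bound j k N Hl0 Hlm Hm1 Hsk Higp) _.
have -> : lam^-1 / (1 - lam / mu) ^+ 2 = mu ^+ 2 / lam / (mu - lam) ^+ 2.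
  by field; lra.
rewrite ler_pM2r; last by rewrite invr_gt0; apply: exprn_gt0; lra.
rewrite ler_pdivlMr //; nra.
Qed.
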